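(* Let $m>2$ and $k$ be positive integers. Then $\mathrm{msum}(mk-1,k)\ge k/2$.
   Context: For positive integers $n>k$, let $S_n$ be the set of permutations $\pi=(\pi_1,\dots,\pi_n)$ of $1,\dots,n$, with cyclic indexing $\pi_{n+i}=\pi_i$, and $s_i=\sum_{j=0}^{k-1}\pi_{i+j}$ for $i=1,\dots,n$. Define $\mathrm{msum}(\pi,k)=\max_{1\le i\le n}s_i-\frac{k(n+1)}{2}$ and $\mathrm{msum}(n,k)=\min_{\pi\in S_n}\mathrm{msum}(\pi,k)$. *)

(* Defs.v *)
From mathcomp Require Import all_boot all_order all_algebra all_fingroup.
Set Implicit Arguments. Unset Strict Implicit. Unset Printing Implicit Defensive.
Import Order.TTheory GRing.Theory Num.Theory.

(* A permutation pi of 1..n is represented by p : 'S_n (a permutation of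
   {0,..,n-1}); the value pi_{i} (1-based position i) is (p (i-1)).+1. *)

(* value at cyclic 0-based position x, i.e. pi_{x+1} with cyclic indexing *)
Definition pval (n : nat) (p : 'S_n) (x : nat) : nat :=
  match @insub nat (fun y => y < n) 'I_n (x %% n) with
  | Some o => (p o).+1
  | None => 0
  end.

(* s_{i+1} = sum_{j=0}^{k-1} pi_{i+1+j}, for 0-based i *)
Definition wsum (n k : nat) (p : 'S_n) (i : nat) : nat :=
  \sum_(j < k) pval p (i + j).

Local Open Scope ring_scope.

Definition msum_perm (n k : nat) (p : 'S_n) : rat :=
  ((\max_(i < n) wsum k p i)%N)%:R - (k * (n + 1))%:R / 2%:R.

(* msum(n,k) = min over all permutations (the identity is used as the
   initial value of the iterated min; it belongs to the range) *)
Definition msum (n k : nat) : rat :=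
  \big[Num.min/msum_perm k (1 : 'S_n)]_(p : 'S_n) msum_perm k p.

(* Main.v *)
Require Import Defs.
From mathcomp Require Import all_boot all_order all_algebra all_fingroup zify ring lra.
Import Order.TTheory GRing.Theory Num.Theory.

Lemma pval_mod n (p : 'S_n) x : Defs.pval p (x %% n) = Defs.pval p x.
Proof. by rewrite /Defs.pval modn_mod. Qed.

Lemma pval_ord n (p : 'S_n) (o : 'I_n) : Defs.pval p o = (p o).+1.
Proof. rewrite /Defs.pval modn_small // insubT // => H; by rewrite (_ : (Sub (nat_of_ord o) H : 'I_n) = o) //; apply: val_inj. Qed.

Lemma pval_per n (p : 'S_n) x : Defs.pval p (x + n) = Defs.pval p x.
Proof. by rewrite -pval_mod modnDr pval_mod. Qed.

Lemma wsum_mod n k (p : 'S_n) x : wsum k p (x %% n) = wsum k p x.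
Proof.
rewrite /wsum; apply: eq_bigr => j _.
by rewrite -[LHS]pval_mod modnDml pval_mod.
Qed.

Lemma shift_sum n (p : 'S_n) i :
  \sum_(s < n) Defs.pval p (i + s) = \sum_(s < n) Defs.pval p s.
Proof.
elim: i => [|i IH]; first by apply: eq_bigr => s _; rewrite add0n.
have E := @big_ord_recl nat 0 addn n (fun s : 'I_n.+1 => Defs.pval p (i + s)).
rewrite big_ord_recr /= pval_per addn0 in E.
rewrite -IH.
have -> : \sum_(s < n) Defs.pval p (i.+1 + s) = \sum_(s < n) Defs.pval p (i + bump 0 s).
  by apply: eq_bigr => s _; rewrite addSnnS.
by apply/eqP; rewrite -(eqn_add2l (Defs.pval p i)) -E addnC.
Qed.

Lemma dsum (f : nat -> nat) m k :
  \sum_(t < m) \sum_(j < k) f (t * k + j) = \sum_(0 <= s < m * k) f s.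
Proof.
elim: m => [|m IH]; first by rewrite big_ord0 mul0n big_geq.
rewrite big_ord_recr /= IH mulSnr (big_cat_nat _ (leq_addr _ _)) //=.
congr (_ + _).
rewrite -[X in \sum_(X <= _ < _) _](add0n (m * k)) big_addn addKn big_mkord; apply: eq_bigr => j _; by rewrite addnC.
Qed.

Lemma tri n : (2 * \sum_(o < n) (nat_of_ord o).+1 = n * n.+1)%N.
Proof.
elim: n => [|n IH]; first by rewrite big_ord0.
rewrite big_ord_recr /= mulnDr IH; lia.
Qed.

Lemma key m k (p : 'S_(m * k - 1)) : (2 < m)%N -> (0 < k)%N ->
  (k * (m * k + 1) <= 2 * \max_(i < m * k - 1) wsum k p i)%N.
Proof.
move=> hm hk.
set n := (m * k - 1)%N in p *.
set M := (\max_(i < n) wsum k p i)%N.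
have hN : n.+1 = (m * k)%N by rewrite /n; nia.
have n_gt0 : (0 < n)%N by rewrite /n; nia.
have hn1 : (n.-1 < n)%N by lia.
pose i0 := (p^-1)%g (Ordinal hn1).
have pi0 : Defs.pval p i0 = n by rewrite pval_ord /i0 permKV /=; lia.
have Hle x : (wsum k p x <= M)%N.
  rewrite -wsum_mod.
  exact: (@leq_bigmax _ (fun i : 'I_n => wsum k p i) (Ordinal (ltn_pmod x n_gt0))).
have H1 : (\sum_(t < m) wsum k p (i0 + t * k) <= m * M)%N.
  apply: leq_trans (_ : \sum_(t < m) M <= _)%N.
    by apply: leq_sum => t _; exact: Hle.
  by rewrite sum_nat_const card_ord.
have H2 : (\sum_(t < m) wsum k p (i0 + t * k) = \sum_(0 <= s < m * k) Defs.pval p (i0 + s))%N.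
  rewrite -(dsum (fun s => Defs.pval p (i0 + s))); apply: eq_bigr => t _.
  by rewrite /wsum; apply: eq_bigr => j _; rewrite addnA.
rewrite H2 -hN big_nat_recr //= pval_per pi0 big_mkord shift_sum in H1.
have H3 : (\sum_(s < n) Defs.pval p s = \sum_(o < n) (nat_of_ord o).+1)%N.
  rewrite [RHS](reindex_inj (@perm_inj _ p)) /=.
  by apply: eq_bigr => o _; rewrite pval_ord.
rewrite H3 in H1.
have H4 := tri n.
nia.
Qed.

Local Open Scope ring_scope.

Lemma perp (m k : nat) (hm : (2 < m)%N) (hk : (0 < k)%N) (p : 'S_(m * k - 1)) :
  k%:R / 2%:R <= msum_perm k p.
Proof.
rewrite /msum_perm.
have h := @key m k p hm hk.
have e : ((m * k - 1) + 1 = m * k)%N by nia.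
rewrite e.
have h' : (k * (m * k + 1))%:R <= (2 * \max_(i < m * k - 1) wsum k p i)%N%:R :> rat by rewrite ler_nat.
move: h'; rewrite !natrM natrD natrM.
set X := (\max_(i < _) _)%N%:R.
move=> h'.
rewrite lerBrDr -mulrDl.
rewrite ler_pdivrMr ?ltr0n //.
lra.
Qed.

Theorem lemma4p1 (m k : nat) (hm : (2 < m)%N) (hk : (0 < k)%N) :
  k%:R / 2%:R <= msum (m * k - 1) k.
Proof.
rewrite /msum.
apply: (big_ind (fun x : rat => k%:R / 2%:R <= x)).
- exact: (@perp m k hm hk 1%g).
- by move=> x y hx hy; rewrite le_min hx hy.
by move=> p _; exact: (@perp m k hm hk p).
Qed.
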